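(* Fix integers $k,d\ge 1$ and let $\mathcal{M}$ be the metric space of (equivalence classes of) measurable $k$-colorings of $\mathbb{R}^d$ described in the context. For every integer $n\geq 1$ and all integers $r_1,\dots,r_d\geq 1$, the set $B_n^{(r_1,\dots,r_d)}$ is a closed subset of $\mathcal{M}$.
   Context: A measurable $k$-coloring of $\mathbb{R}^d$ is a map $f:\mathbb{R}^d\to\{1,\dots,k\}$ whose color classes are Lebesgue measurable. For measurable colorings $f,g$ and integer $n\ge1$, let $D_n(f,g)=\{x\in[-n,n]^d: f(x)\neq g(x)\}$, $d_n(f,g)=\lambda(D_n(f,g))/n^d$ where $\lambda$ is $d$-dimensional Lebesgue measure, and $d(f,g)=\sum_{n=1}^\infty d_n(f,g)/2^{n+1}$. $\mathcal{M}$ is the metric space obtained by identifying colorings at distance $0$, with metric $d$. A cube is a product of $d$ non-degenerate intervals of equal length. A splitting of a cube $[a_1,b_1]\times\cdots\times[a_d,b_d]$ with exactly $r_i$ cuts in the $i$-th dimension is given by points $a_i=z^i_0<z^i_1<\dots<z^i_{r_i}<z^i_{r_i+1}=b_i$ for each $i$, cutting the cube into the cuboids $\prod_i[z^i_{j_i},z^i_{j_i+1}]$; its granularity is the minimum of the lengths $z^i_{j+1}-z^i_j$ over all $i,j$. The splitting is fair for $f$ if the cuboids can be partitioned into two families each of whose unions contains exactly half of the Lebesgue measure of each color class of $f$ within the cube. $B_n^{(r_1,\dots,r_d)}$ is the set of colorings in $\mathcal{M}$ for which there exists at least one cube contained in $[-n,n]^d$ having a fair splitting with exactly $r_i$ cuts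 in the $i$-th dimension for each $i$ and granularity at least $1/n$. *)

(* Defs.v *)
From HB Require Import structures.
From mathcomp Require Import all_boot all_order all_algebra.
From mathcomp Require Import all_classical all_reals all_analysis.
Set Implicit Arguments. Unset Strict Implicit. Unset Printing Implicit Defensive.
Import Order.TTheory GRing.Theory Num.Theory.
Local Open Scope classical_set_scope.
Local Open Scope ring_scope.

Section Defs.
Variables (R : realType) (d : nat).

Definition pt := 'I_d -> R.

Definition box (a b : pt) : set pt := [set x | forall i, a i <= x i <= b i].

Definition box_vol (a b : pt) : R := \prod_(i < d) Num.max (b i - a i) 0.

(* d-dimensional Lebesgue outer measure: infimum of the total volumes of
   countable covers by boxes.  On Lebesgue measurable sets this is the
   Lebesgue measure lambda. *)
Definition leb_outer (A : set pt) : \bar R :=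
  ereal_inf [set s : \bar R | exists (a b : nat -> pt),
     A `<=` \bigcup_m box (a m) (b m) /\
     s = (\sum_(0 <= m <oo) (box_vol (a m) (b m))%:E)%E].

Definition leb_measurable (A : set pt) : Prop :=
  forall E : set pt, leb_outer E = (leb_outer (E `&` A) + leb_outer (E `&` ~` A))%E.

Definition meas_coloring (k : nat) (f : pt -> 'I_k) : Prop :=
  forall c : 'I_k, leb_measurable (f @^-1` [set c]).

Definition cubeN (n : nat) : set pt :=
  [set x | forall i, - (n%:R) <= x i <= n%:R].

Definition Dn (k n : nat) (f g : pt -> 'I_k) : set pt :=
  cubeN n `&` [set x | f x <> g x].

Definition dn (k n : nat) (f g : pt -> 'I_k) : \bar R :=
  (leb_outer (Dn n f g) * ((n%:R ^+ d)^-1)%:E)%E.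

Definition dist (k : nat) (f g : pt -> 'I_k) : \bar R :=
  (\sum_(1 <= n <oo) (dn n f g * ((2%:R ^+ n.+1)^-1)%:E))%E.

Definition cube (a : pt) (s : R) : set pt := box a (fun i => a i + s).

(* the cuboid with index j (0 <= j i <= r i) of the splitting given by the
   cut points z i 0 < z i 1 < ... < z i (r i).+1 *)
Definition cuboid (z : 'I_d -> nat -> R) (j : 'I_d -> nat) : set pt :=
  box (fun i => z i (j i)) (fun i => z i (j i).+1).

Definition valid_index (r : 'I_d -> nat) (j : 'I_d -> nat) : Prop :=
  forall i, (j i <= r i)%N.

(* B_n^{(r_1,...,r_d)}: there is a cube contained in [-n,n]^d with a splitting
   having exactly r i cuts in dimension i, granularity >= 1/n, which is fair
   for f: the cuboids can be split into two families (sigma = true / false)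
   such that the union of the first family contains exactly half of the
   measure of each color class of f within the cube (hence so does the
   second family, up to a null set). *)
Definition B (k n : nat) (r : 'I_d -> nat) (f : pt -> 'I_k) : Prop :=
  exists (a : pt) (s : R) (z : 'I_d -> nat -> R) (sigma : ('I_d -> nat) -> bool),
    [/\ 0 < s,
        cube a s `<=` cubeN n,
        (forall i, z i 0%N = a i /\ z i (r i).+1 = a i + s),
        (forall i (j : nat), (j <= r i)%N ->
            z i j < z i j.+1 /\ (n%:R)^-1 <= z i j.+1 - z i j) &
        (forall c : 'I_k,
           leb_outer ([set x | exists j, [/\ valid_index r j, sigma j & cuboid z j x]]
                        `&` (f @^-1` [set c]))
           = (leb_outer (cube a s `&` (f @^-1` [set c])) * (2^-1)%:E)%E /\
           leb_outer ([set x | exists j, [/\ valid_index r j, ~~ sigma j & cuboid z j x]]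
                        `&` (f @^-1` [set c]))
           = (leb_outer (cube a s `&` (f @^-1` [set c])) * (2^-1)%:E)%E)].

End Defs.

(* Main.v *)
Require Import Defs.
From HB Require Import structures.
From mathcomp Require Import all_boot all_order all_algebra.
From mathcomp Require Import all_classical all_reals all_analysis.
From mathcomp Require Import lra ring.
Import Order.TTheory GRing.Theory Num.Theory.
Local Open Scope classical_set_scope.
Local Open Scope ring_scope.
Set Implicit Arguments. Unset Strict Implicit. Unset Printing Implicit Defensive.


Section OM.
Variables (R : realType) (d : nat).
Hypothesis hd : (0 < d)%N.
Local Notation pt := (pt R d).
Local Notation lam := (@leb_outer R d).

Lemma box_vol_ge0 (a b : pt) : 0 <= box_vol a b.
Proof. by apply: prodr_ge0 => i _; rewrite le_max lexx orbT. Qed.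

Lemma lo_ge0 (A : set pt) : (0 <= lam A)%E.
Proof.
apply: le_ereal_inf_tmp => _ [a [b [_ ->]]].
by apply: nneseries_ge0 => m _ _; rewrite lee_fin box_vol_ge0.
Qed.

Lemma lo_mono (A B : set pt) : A `<=` B -> (lam A <= lam B)%E.
Proof.
move=> AB; apply: ereal_inf_le_tmp => x [a [b [cov ->]]].
by exists a, b; split => //; exact: subset_trans AB cov.
Qed.

Lemma series_le_ub (u : nat -> \bar R) (C : \bar R) :
  (forall m, (0 <= u m)%E) -> (forall N, (\sum_(0 <= m < N) u m <= C)%E) ->
  (\sum_(0 <= m <oo) u m <= C)%E.
Proof.
move=> u0 uC; apply: lime_le; first by apply: is_cvg_nneseries => m _ _.
exact: nearW.
Qed.

Lemma box_vol_pt (a : pt) : box_vol a a = 0.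
Proof.
by rewrite /box_vol (bigD1 (Ordinal hd)) //= subrr maxxx mul0r.
Qed.

Lemma lo_box (a b : pt) : (lam (box a b) <= (box_vol a b)%:E)%E.
Proof.
apply: ge_ereal_inf.
pose a' := fun m : nat => a.
pose b' := fun m : nat => if m is 0%N then b else a.
exists (\sum_(0 <= m <oo) (box_vol (a' m) (b' m))%:E)%E.
  exists a', b'; split => // x bx; exists 0%N => //.
apply: series_le_ub => [m|N]; first by rewrite lee_fin box_vol_ge0.
case: N => [|N]; first by rewrite big_geq // lee_fin box_vol_ge0.
rewrite big_nat_recl // big1 ?adde0 // => i _.
by rewrite /a' /b' box_vol_pt.
Qed.

Lemma interleave_sum (x y : nat -> \bar R) N :
  (\sum_(0 <= m < N.*2) (if odd m then y m./2 else x m./2) =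
   \sum_(0 <= m < N) x m + \sum_(0 <= m < N) y m)%E.
Proof.
elim: N => [|N IH]; first by rewrite !big_geq // adde0.
rewrite doubleS !big_nat_recr //= IH odd_double /= uphalf_double.
rewrite half_double.
by rewrite -!addeA; congr (_ + _)%E; rewrite addeCA.
Qed.


Lemma lo_neqNy (A : set pt) : lam A != -oo%E.
Proof. by rewrite (gt_eqF (lt_le_trans ltNy0 (lo_ge0 A))). Qed.

Lemma lo_setU (A B : set pt) : (lam (A `|` B) <= lam A + lam B)%E.
Proof.
have [->|Af] := eqVneq (lam A) +oo%E; first by rewrite addye ?leey // lo_neqNy.
have [->|Bf] := eqVneq (lam B) +oo%E; first by rewrite addey ?leey // lo_neqNy.
have fA : lam A \is a fin_num by rewrite fin_numE Af lo_neqNy.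
have fB : lam B \is a fin_num by rewrite fin_numE Bf lo_neqNy.
apply/lee_addgt0Pr => e e0.
have e2 : 0 < e / 2 by rewrite divr_gt0.
have := lteDl ((e/2)%:E) fA; rewrite lte_fin e2 => /ereal_inf_lt [_ [aA [bA [covA ->]]]] lA.
have := lteDl ((e/2)%:E) fB; rewrite lte_fin e2 => /ereal_inf_lt [_ [aB [bB [covB ->]]]] lB.
pose a2 := fun m : nat => if odd m then aB m./2 else aA m./2.
pose b2 := fun m : nat => if odd m then bB m./2 else bA m./2.
apply: le_trans (_ : (\sum_(0 <= m <oo) (box_vol (a2 m) (b2 m))%:E <= _)%E).
  apply: ereal_inf_lbound; exists a2, b2; split => //.
  move=> x [/covA [m _ Hm]|/covB [m _ Hm]].
    by exists m.*2 => //; rewrite /a2 /b2 odd_double half_double.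
  by exists m.*2.+1 => //; rewrite /a2 /b2 /= odd_double /= uphalf_double.
apply: series_le_ub => [m|N]; first by rewrite lee_fin box_vol_ge0.
apply: le_trans (_ : \sum_(0 <= m < N.*2) (box_vol (a2 m) (b2 m))%:E <= _)%E.
  apply: (lee_sum_nneg_natr _ xpredT) => [m _ _|]; first by rewrite lee_fin box_vol_ge0.
  by rewrite -addnn leq_addr.
have -> : (\sum_(0 <= m < N.*2) (box_vol (a2 m) (b2 m))%:E =
   \sum_(0 <= m < N.*2) (if odd m then (box_vol (aB m./2) (bB m./2))%:E
                        else (box_vol (aA m./2) (bA m./2))%:E))%E.
  by apply: eq_bigr => m _; rewrite /a2 /b2; case: (odd m).
rewrite (interleave_sum (fun m => (box_vol (aA m) (bA m))%:E) (fun m => (box_vol (aB m) (bB m))%:E)).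
apply: le_trans (_ : (\sum_(0 <= m <oo) (box_vol (aA m) (bA m))%:E
     + \sum_(0 <= m <oo) (box_vol (aB m) (bB m))%:E <= _)%E).
  by apply: leeD; apply: nneseries_lim_ge => m _ _; rewrite lee_fin box_vol_ge0.
apply: ltW; apply: (lt_le_trans (lteD lA lB)).
by rewrite -(fineK fA) -(fineK fB) -!EFinD lee_fin; lra.
Qed.

End OM.


Section Mu.
Variables (R : realType) (d : nat) (n : nat).
Hypothesis hd : (0 < d)%N.
Local Notation pt := (pt R d).
Local Notation lam := (@leb_outer R d).
Local Notation C := (@cubeN R d n).

Definition mu (A : set pt) : R := fine (lam A).

Lemma lo_fin (A : set pt) : A `<=` C -> lam A \is a fin_num.
Proof.
move=> AC; rewrite fin_numE lo_neqNy /=.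
have h : (lam A <= (box_vol (fun _ : 'I_d => - n%:R) (fun _ => n%:R))%:E)%E.
  have hb := lo_box (R:=R) hd (fun _ : 'I_d => - n%:R) (fun _ => n%:R).
  have hC : C = box (fun _ : 'I_d => - n%:R) (fun _ => n%:R) by [].
  by apply: (le_trans _ hb); rewrite -hC; exact: lo_mono.
by rewrite (lt_eqF (le_lt_trans h (ltry _))).
Qed.

Lemma mu_E (A : set pt) : A `<=` C -> lam A = (mu A)%:E.
Proof. by move=> AC; rewrite /mu fineK // lo_fin. Qed.

Lemma mu_ge0 (A : set pt) : 0 <= mu A.
Proof. exact/fine_ge0/lo_ge0. Qed.

Lemma mu_mono (A B : set pt) : A `<=` B -> B `<=` C -> mu A <= mu B.
Proof.
move=> AB BC; rewrite -lee_fin -!mu_E //; last exact: subset_trans AB BC.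
exact: lo_mono.
Qed.

Lemma mu_sub (A B B' : set pt) : A `<=` B `|` B' -> B `<=` C -> B' `<=` C ->
  mu A <= mu B + mu B'.
Proof.
move=> AB BC B'C.
have AC : A `<=` C by move=> x /AB [/BC|/B'C].
rewrite -lee_fin EFinD -!mu_E //.
exact: (le_trans (lo_mono AB) (lo_setU B B')).
Qed.

Lemma mu_le_box (A : set pt) a b : A `<=` box a b -> A `<=` C -> mu A <= box_vol a b.
Proof.
move=> Ab AC; rewrite -lee_fin -mu_E //.
exact: le_trans (lo_mono Ab) (lo_box (R:=R) hd _ _).
Qed.

Lemma mu_bigU (I : eqType) (s : seq I) (F : I -> set pt) :
  (forall i, F i `<=` C) ->
  mu [set x | exists2 i, i \in s & F i x] <= \sum_(i <- s) mu (F i).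
Proof.
move=> FC; elim: s => [|i s IH].
  rewrite big_nil.
  have -> : [set x | exists2 i, i \in [::] & F i x] = set0.
    by apply/seteqP; split => x // [].
  rewrite /mu (_ : lam set0 = 0%E) //.
  apply/eqP; rewrite eq_le lo_ge0 andbT.
  apply: le_trans (lo_mono (sub0set (box (fun _ => 0) (fun _ => 0)))) _.
  by apply: le_trans (lo_box (R:=R) hd _ _) _; rewrite box_vol_pt.
rewrite big_cons; apply: le_trans (lerD (lexx _) IH).
apply: mu_sub => //.
- move=> x [j]; rewrite inE => /orP [/eqP ->|js] Fx; [by left|by right; exists j].
- by move=> x [j _ /FC].
Qed.

End Mu.


Section Param.
Variables (R : realType) (d : nat) (n : nat) (r : 'I_d -> nat).
Hypothesis hd : (0 < d)%N.
Hypothesis hn : (0 < n)%N.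
Local Notation pt := (pt R d).
Local Notation C := (@cubeN R d n).
Local Notation mu := (@mu R d).

Definition M := (\max_(i < d) r i)%N.
Definition Mm := M.+2.

Lemma r_le i : (r i <= M)%N.
Proof. exact: (leq_bigmax i). Qed.

Definition i0 : 'I_d := Ordinal hd.
Definition sz (z : 'I_d -> nat -> R) := z i0 (r i0).+1 - z i0 0%N.

Definition Valid (z : 'I_d -> nat -> R) : Prop :=
  [/\ forall i, z i (r i).+1 - z i 0%N = sz z,
      forall i, - n%:R <= z i 0%N /\ z i (r i).+1 <= n%:R &
      forall i j, (j <= r i)%N -> n%:R^-1 <= z i j.+1 - z i j].

Definition Cb (z : 'I_d -> nat -> R) : set pt :=
  box (fun i => z i 0%N) (fun i => z i (r i).+1).

Definition Fam (z : 'I_d -> nat -> R) (P : ('I_d -> nat) -> bool) : set pt :=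
  [set x | exists j, [/\ valid_index r j, P j & cuboid z j x]].

Lemma ninv_gt0 : 0 < n%:R^-1 :> R.
Proof. by rewrite invr_gt0 ltr0n. Qed.

Lemma valid_mono z i j m : Valid z -> (j + m <= (r i).+1)%N -> z i j <= z i (j + m)%N.
Proof.
case=> _ _ hg; elim: m => [|m IH] hjm; first by rewrite addn0.
apply: le_trans (IH _) _; first by apply: leq_trans hjm; rewrite leq_add2l.
rewrite addnS; have := hg i (j + m)%N.
have h : (j + m <= r i)%N by rewrite -ltnS -addnS.
move=> /(_ h) H; have := ninv_gt0; lra.
Qed.

Lemma valid_Cb z : Valid z -> Cb z `<=` C.
Proof.
move=> vz x bx i; have [_ h _] := vz; have [h1 h2] := h i.
have /andP [x1 x2] := bx i.
by apply/andP; split; [exact: le_trans x1|exact: le_trans h2].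
Qed.

Lemma valid_cuboid z j : Valid z -> valid_index r j -> cuboid z j `<=` Cb z.
Proof.
move=> vz vj x cx i; have /andP [x1 x2] := cx i.
apply/andP; split.
  apply: le_trans x1; have := valid_mono (i:=i) (j:=0%N) (m:=j i) vz.
  by rewrite add0n; apply; apply: leq_trans (vj i) _.
apply: (le_trans x2); have := valid_mono (i:=i) (j:=(j i).+1) (m:=r i - j i) vz.
have e : ((j i).+1 + (r i - j i) = (r i).+1)%N.
  by rewrite addSn subnKC // vj.
by rewrite e; apply.
Qed.

Lemma valid_Fam z P : Valid z -> Fam z P `<=` C.
Proof.
move=> vz x [j [vj _ cx]]; apply: (valid_Cb vz); exact: valid_cuboid cx.
Qed.

Definition SL (z : 'I_d -> nat -> R) (δ : R) : set pt :=
  C `&` [set x : pt | exists (i : 'I_d) (t : 'I_Mm), `|x i - z i t| <= δ].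

Lemma slab_box (z z' : 'I_d -> nat -> R) (δ : R) (l u : 'I_d -> nat) (x : pt) :
  (forall i, (l i <= (r i).+1)%N /\ (u i <= (r i).+1)%N) ->
  (forall i t, `|z' i t - z i t| <= δ) ->
  box (fun i => z' i (l i)) (fun i => z' i (u i)) x ->
  ~ box (fun i => z i (l i)) (fun i => z i (u i)) x ->
  exists i (t : 'I_Mm), `|x i - z i t| <= δ.
Proof.
move=> hlu hz bx /existsNP [i /negP]; rewrite negb_and -!ltNge => hi.
have /andP [x1 x2] := bx i.
have [hl hu] := hlu i.
have ltM t : (t <= (r i).+1)%N -> (t < Mm)%N.
  by move=> ht; apply: leq_ltn_trans ht _; rewrite /Mm !ltnS r_le.
case/orP: hi => hi.
  exists i, (inord (l i)); rewrite inordK ?ltM //.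
  have := hz i (l i); rewrite !ler_norml => /andP [h1 h2].
  apply/andP; split; lra.
exists i, (inord (u i)); rewrite inordK ?ltM //.
have := hz i (u i); rewrite !ler_norml => /andP [h1 h2].
apply/andP; split; lra.
Qed.


Definition Sb (z : 'I_d -> nat -> R) (δ : R) (p : 'I_d * 'I_Mm) : set pt :=
  box (fun l => if l == p.1 then z p.1 p.2 - δ else - n%:R)
      (fun l => if l == p.1 then z p.1 p.2 + δ else n%:R).

Lemma vol_Sb (z : 'I_d -> nat -> R) (δ : R) (p : 'I_d * 'I_Mm) : 0 <= δ ->
  box_vol (fun l => if l == p.1 then z p.1 p.2 - δ else - n%:R)
      (fun l => if l == p.1 then z p.1 p.2 + δ else n%:R : R)
  = (2 * δ) * (n%:R + n%:R) ^+ d.-1.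
Proof.
move=> d0; rewrite /box_vol (bigD1 p.1) //= eqxx.
have -> : Num.max (z p.1 p.2 + δ - (z p.1 p.2 - δ)) 0 = 2 * δ.
  by rewrite max_l; lra.
congr (_ * _).
rewrite (eq_bigr (fun _ => n%:R + n%:R)); last first.
  by move=> l /negbTE ->; rewrite opprK max_l // addr_ge0 // ler0n.
by rewrite prodr_const cardC1 card_ord.
Qed.

Definition Kc : R := (d * Mm)%:R * (2 * (n%:R + n%:R) ^+ d.-1).

Lemma mu_SL (z : 'I_d -> nat -> R) (δ : R) : 0 <= δ -> mu (SL z δ) <= Kc * δ.
Proof.
move=> d0.
pose T := ('I_d * 'I_Mm)%type.
apply: le_trans (mu_mono (n:=n) (B := [set x | exists2 p, p \in index_enum T & (Sb z δ p `&` C) x]) hd _ _) _.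
- move=> x [Cx [i [t h]]]; exists (i, t); first by rewrite mem_index_enum.
  split => // l; rewrite /=; case: eqP => [->|_]; last exact: Cx.
  by move: h; rewrite ler_norml => /andP [h1 h2]; apply/andP; split; lra.
- by move=> x [_ _ [_ Cx]].
have hF : forall p, Sb z δ p `&` C `<=` C by move=> p x [].
apply: le_trans (mu_bigU hd _ hF) _.
apply: le_trans (_ : \sum_(p : T) (2 * δ) * (n%:R + n%:R) ^+ d.-1 <= _).
  apply: ler_sum => p _; rewrite -(vol_Sb z p d0).
  by apply: (mu_le_box (n:=n) hd); move=> x [].
rewrite sumr_const -[#|_|]/#|{: 'I_d * 'I_Mm}| card_prod !card_ord -mulr_natl.
by rewrite [X in X <= _](_ : _ = Kc * δ) // /Kc; ring.
Qed.

End Param.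


Lemma phi_gen (R : realType) (k : nat) (T Fa Q T' Fa' Q' : 'I_k -> R) (η : R) :
  (forall c, [/\ `|T c - T' c| <= η, `|Fa c - Fa' c| <= η & `|Q c - Q' c| <= η]) ->
  `|\sum_(c < k) (`|T c - Q c / 2| + `|Fa c - Q c / 2|)
    - \sum_(c < k) (`|T' c - Q' c / 2| + `|Fa' c - Q' c / 2|)| <= k%:R * (3 * η).
Proof.
move=> h; rewrite -sumrB; apply: le_trans (ler_norm_sum _ _ _) _.
have -> : k%:R * (3 * η) = \sum_(c < k) (3 * η) by rewrite sumr_const card_ord mulr_natl.
apply: ler_sum => c _.
have [h1 h2 h3] := h c.
have e1 := ler_dist_dist (T c - Q c / 2) (T' c - Q' c / 2).
have e2 := ler_dist_dist (Fa c - Q c / 2) (Fa' c - Q' c / 2).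
move: h1 h2 h3; rewrite !ler_norml.
move=> /andP [a1 a2] /andP [b1 b2] /andP [c1 c2].
have k1 : `|(T c - Q c / 2) - (T' c - Q' c / 2)| <= η + η / 2.
  by rewrite ler_norml; apply/andP; split; lra.
have k2 : `|(Fa c - Q c / 2) - (Fa' c - Q' c / 2)| <= η + η / 2.
  by rewrite ler_norml; apply/andP; split; lra.
move: e1 e2; rewrite !ler_norml => /andP [d1 d2] /andP [f1 f2].
apply/andP; split; lra.
Qed.

Section Phi.
Variables (R : realType) (d k n : nat) (r : 'I_d -> nat).
Hypothesis hd : (0 < d)%N.
Hypothesis hn : (0 < n)%N.
Local Notation pt := (pt R d).
Local Notation C := (@cubeN R d n).
Local Notation mu := (@mu R d).
Local Notation Mm := (Mm r).
Local Notation Valid := (Valid n r hd).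
Local Notation Fam := (@Fam R d r).
Local Notation Cb := (@Cb R d r).
Local Notation SL := (@SL R d n r).
Local Notation Kc := (@Kc R d n r).

Lemma fam_move (z z' : 'I_d -> nat -> R) δ P (X : set pt) :
  Valid z' -> (forall i t, `|z' i t - z i t| <= δ) ->
  Fam z' P `&` X `<=` (Fam z P `&` X) `|` SL z δ.
Proof.
move=> vz' hz x [[j [vj Pj cx]] Xx].
have [cz|ncz] := pselect (cuboid z j x); first by left; split => //; exists j.
right; split; first by apply: (valid_Fam hn vz'); exists j.
apply: (slab_box (z' := z') (l := j) (u := fun i => (j i).+1)) => // i.
by split; [apply: leqW|]; apply: vj.
Qed.

Lemma cb_move (z z' : 'I_d -> nat -> R) δ (X : set pt) :
  Valid z' -> (forall i t, `|z' i t - z i t| <= δ) ->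
  Cb z' `&` X `<=` (Cb z `&` X) `|` SL z δ.
Proof.
move=> vz' hz x [cx Xx].
have [cz|ncz] := pselect (Cb z x); first by left.
right; split; first exact: (valid_Cb vz').
by apply: (slab_box (z' := z') (l := fun=> 0%N) (u := fun i => (r i).+1)).
Qed.

Lemma move_gen (z z' : 'I_d -> nat -> R) δ (Y Y' X : set pt) :
  Y `<=` C -> Y' `<=` C -> 0 <= δ ->
  Y' `&` X `<=` (Y `&` X) `|` SL z δ -> Y `&` X `<=` (Y' `&` X) `|` SL z' δ ->
  `|mu (Y' `&` X) - mu (Y `&` X)| <= Kc * δ.
Proof.
move=> YC Y'C d0 h1 h2.
have YXC : Y `&` X `<=` C by move=> x [/YC].
have Y'XC : Y' `&` X `<=` C by move=> x [/Y'C].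
have SC : forall z0, SL z0 δ `<=` C by move=> z0 x [].
have := mu_sub hd h1 YXC (SC z); have := mu_sub hd h2 Y'XC (SC z').
have := mu_SL n r hd z d0; have := mu_SL n r hd z' d0.
rewrite ler_norml; move=> *; apply/andP; split; lra.
Qed.


Definition Xc (f : pt -> 'I_k) (c : 'I_k) : set pt := f @^-1` [set c].
Definition cls (j : 'I_d -> nat) : {ffun 'I_d -> 'I_Mm} := [ffun i => inord (j i)].
Definition PT (σ : {ffun {ffun 'I_d -> 'I_Mm} -> bool}) := fun j => σ (cls j).
Definition PF (σ : {ffun {ffun 'I_d -> 'I_Mm} -> bool}) := fun j => ~~ σ (cls j).

Definition Phi (f : pt -> 'I_k) (z : 'I_d -> nat -> R) σ : R :=
  \sum_(c < k) (`|mu (Fam z (PT σ) `&` Xc f c) - mu (Cb z `&` Xc f c) / 2|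
              + `|mu (Fam z (PF σ) `&` Xc f c) - mu (Cb z `&` Xc f c) / 2|).

Lemma phi_move f (z z' : 'I_d -> nat -> R) δ σ : Valid z -> Valid z' ->
  (forall i t, `|z' i t - z i t| <= δ) ->
  `|Phi f z' σ - Phi f z σ| <= k%:R * (3 * (Kc * δ)).
Proof.
move=> vz vz' hz.
have hz2 : forall i t, `|z i t - z' i t| <= δ by move=> i t; rewrite distrC.
have d0 : 0 <= δ := le_trans (normr_ge0 _) (hz (Ordinal hd) 0%N).
apply: phi_gen => c; split.
- exact: (move_gen (valid_Fam hn vz) (valid_Fam hn vz') d0 (fam_move vz' hz) (fam_move vz hz2)).
- exact: (move_gen (valid_Fam hn vz) (valid_Fam hn vz') d0 (fam_move vz' hz) (fam_move vz hz2)).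
- exact: (move_gen (valid_Cb vz) (valid_Cb vz') d0 (cb_move vz' hz) (cb_move vz hz2)).
Qed.

Lemma phi_col f g (z : 'I_d -> nat -> R) σ : Valid z ->
  `|Phi g z σ - Phi f z σ| <= k%:R * (3 * mu (Dn n f g)).
Proof.
move=> vz; have DC : Dn n f g `<=` C by move=> x [].
have key : forall Y, Y `<=` C -> forall c,
    `|mu (Y `&` Xc g c) - mu (Y `&` Xc f c)| <= mu (Dn n f g).
  move=> Y YC c.
  have h1 : Y `&` Xc g c `<=` (Y `&` Xc f c) `|` Dn n f g.
    move=> x [Yx gx]; have [fx|fx] := pselect (f x = c); first by left.
    by right; split; [exact: YC|rewrite /Xc /= in gx *; rewrite gx].
  have h2 : Y `&` Xc f c `<=` (Y `&` Xc g c) `|` Dn n f g.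
    move=> x [Yx fx]; have [gx|gx] := pselect (g x = c); first by left.
    by right; split; [exact: YC|rewrite /Xc /= in fx *; rewrite fx => /esym].
  have YgC : Y `&` Xc g c `<=` C by move=> x [/YC].
  have YfC : Y `&` Xc f c `<=` C by move=> x [/YC].
  have := mu_sub hd h1 YfC DC; have := mu_sub hd h2 YgC DC.
  rewrite ler_norml => *; apply/andP; split; lra.
apply: phi_gen => c; split.
- exact: (key _ (valid_Fam hn vz)).
- exact: (key _ (valid_Fam hn vz)).
- exact: (key _ (valid_Cb vz)).
Qed.

End Phi.

Import numFieldNormedType.Exports.


Section Compact.
Variables (R : realType) (d k n : nat) (r : 'I_d -> nat).
Hypothesis hd : (0 < d)%N.
Hypothesis hn : (0 < n)%N.
Local Notation pt := (pt R d).
Local Notation C := (@cubeN R d n).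
Local Notation mu := (@mu R d).
Local Notation Mm := (Mm r).
Local Notation Valid := (Valid n r hd).
Local Notation Kc := (@Kc R d n r).
Local Notation Phi := (@Phi R d k r).
Local Notation N := (d * Mm)%N.

Definition zv (v : 'rV[R]_N) : 'I_d -> nat -> R :=
  fun i t => v 0 (mxvec_index i (inord t)).

Definition Pset : set 'rV[R]_N :=
  [set v | Valid (zv v) /\ forall c, - n%:R <= v 0 c <= n%:R].

Lemma Kc_ge0 : 0 <= Kc.
Proof.
rewrite /Kc; apply: mulr_ge0; first exact: ler0n.
by apply: mulr_ge0; [lra|apply: exprn_ge0; apply: addr_ge0; exact: ler0n].
Qed.

Lemma valid_lim (p : 'rV[R]_N) :
  (forall e, 0 < e -> exists v, Pset v /\ forall i t, `|zv v i t - zv p i t| <= e) ->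
  Valid (zv p).
Proof.
move=> h.
have app : forall (P : ('I_d -> nat -> R) -> R) (L : R), 0 <= L ->
    (forall z z' : 'I_d -> nat -> R, forall e, (forall i t, `|z i t - z' i t| <= e) ->
       P z <= P z' + L * e) ->
    (forall v, Pset v -> 0 <= P (zv v)) -> 0 <= P (zv p).
  move=> P L L0 hP hpos; apply/ler_addgt0Pr => e e0.
  have eL : 0 < e / (L + 1) by apply: divr_gt0; lra.
  have [v [Pv hv]] := h _ eL.
  have := hP _ _ _ hv; have := hpos v Pv.
  have : L * (e / (L + 1)) <= e.
    rewrite mulrA ler_pdivrMr; last lra.
    rewrite mulrDr mulr1; nra.
  lra.
have I0 := i0 hd.
split.
- move=> i; apply/eqP; rewrite -subr_eq0 eq_le; apply/andP; split.
  + rewrite -oppr_ge0.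
    apply: (app (fun z => - (z i (r i).+1 - z i 0%N - sz r hd z)) 4) => //.
      move=> z z' e hz; rewrite /sz; have := hz i (r i).+1; have := hz i 0%N.
      have := hz (i0 hd) (r (i0 hd)).+1; have := hz (i0 hd) 0%N; rewrite !ler_norml.
      move=> /andP [? ?] /andP [? ?] /andP [? ?] /andP [? ?]; lra.
    by move=> v [[h1 _ _] _]; rewrite h1 subrr oppr0.
  + apply: (app (fun z => (z i (r i).+1 - z i 0%N - sz r hd z)) 4) => //.
      move=> z z' e hz; rewrite /sz; have := hz i (r i).+1; have := hz i 0%N.
      have := hz (i0 hd) (r (i0 hd)).+1; have := hz (i0 hd) 0%N; rewrite !ler_norml.
      move=> /andP [? ?] /andP [? ?] /andP [? ?] /andP [? ?]; lra.
    by move=> v [[h1 _ _] _]; rewrite h1 subrr.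
- move=> i; split.
  + rewrite -subr_ge0 opprK.
    apply: (app (fun z => z i 0%N + n%:R) 1) => //.
      move=> z z' e hz; have := hz i 0%N; rewrite !ler_norml.
      move=> /andP [? ?]; lra.
    by move=> v [[_ h2 _] _]; have [h3 _] := h2 i; rewrite -subr_ge0 opprK in h3.
  + rewrite -subr_ge0.
    apply: (app (fun z => n%:R - z i (r i).+1) 1) => //.
      move=> z z' e hz; have := hz i (r i).+1; rewrite !ler_norml.
      move=> /andP [? ?]; lra.
    by move=> v [[_ h2 _] _]; have [_ h3] := h2 i; rewrite subr_ge0.
- move=> i j hj; rewrite -subr_ge0.
  apply: (app (fun z => z i j.+1 - z i j - n%:R^-1) 2) => //.
    move=> z z' e hz; have := hz i j.+1; have := hz i j; rewrite !ler_norml.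
    move=> /andP [? ?] /andP [? ?]; lra.
  by move=> v [[_ _ h3] _]; rewrite subr_ge0; apply: h3.
Qed.


Lemma phi_min (f : pt -> 'I_k) σ :
  (forall v, Pset v -> 0 < Phi f (zv v) σ) ->
  exists2 e, 0 < e & forall v, Pset v -> e <= Phi f (zv v) σ.
Proof.
move=> hpos; apply: contrapT => hno.
have H : forall e, 0 < e -> exists v, Pset v /\ Phi f (zv v) σ < e.
  move=> e e0; apply: contrapT => hn'; apply: hno; exists e => // v Pv.
  by rewrite leNgt; apply/negP => lt; apply: hn'; exists v.
pose B e := [set v | Pset v /\ Phi f (zv v) σ < e].
pose F := filter_from [set e : R | 0 < e] B.
have FF : ProperFilter F.
  apply: filter_from_proper; last by move=> e e0; have [v hv] := H e e0; exists v.
  apply: filter_from_filter; first by exists 1; rewrite /= ltr01.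
  move=> i j i0 j0; exists (Num.min i j); first by rewrite /= lt_min i0 j0.
  move=> v [Pv hv]; split; split => //; apply: lt_le_trans hv _;
    by rewrite ge_min lexx ?orbT.
pose Kb := [set v : 'rV[R]_N | forall c, (fun=> `[- n%:R, n%:R]%classic) c (v ord0 c)].
have Kbc : compact Kb.
  exact: (@rV_compact R N (fun=> `[- n%:R, n%:R]%classic) (fun _ => @segment_compact R (- n%:R) n%:R)).
have FK : F Kb.
  exists 1; first by rewrite /= ltr01.
  by move=> v [[_ hc] _] c; rewrite /= in_itv /=; exact: hc.
have [p0 [Kp clp]] := Kbc F FF FK.
have close : forall e, 0 < e -> exists v, [/\ Pset v, Phi f (zv v) σ < e &
    forall i t, `|zv v i t - zv p0 i t| <= e].
  move=> e e0.
  have FB : F (B e) by exists e.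
  have [v [[Pv hv] bv]] := clp _ _ FB (nbhsx_ballx p0 e e0).
  exists v; split => // i t; rewrite distrC; apply: ltW.
  by move: bv => [_ hb]; have := hb 0 (mxvec_index i (inord t)).
have vp0 : Valid (zv p0).
  apply: valid_lim => e e0; have [v [Pv _ hv]] := close e e0; by exists v.
have Pp0 : Pset p0.
  by split => // c; have := Kp c; rewrite /= in_itv.
have pos := hpos p0 Pp0.
set Φ0 := Phi f (zv p0) σ in pos.
have L0 : 0 <= k%:R * (3 * Kc) by apply: mulr_ge0; [exact: ler0n|apply: mulr_ge0; [lra|exact: Kc_ge0]].
set L := k%:R * (3 * Kc) in L0.
pose e := Φ0 / (2 * (1 + L)).
have e0 : 0 < e by apply: divr_gt0 => //; lra.
have [v [Pv hv hz]] := close e e0.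
have := phi_move hn f σ vp0 (proj1 Pv) hz.
have eq : e + k%:R * (3 * (Kc * e)) = Φ0 / 2.
  rewrite /e /L; field; rewrite /L in L0; apply: lt0r_neq0; lra.
rewrite ler_norml => /andP [h1 h2]; rewrite /Φ0 in eq pos; lra.
Qed.

End Compact.


Lemma fin_min (R : realType) (S : finType) (Q : S -> R -> Prop) :
  (forall s, exists2 e, 0 < e & Q s e) ->
  (forall s e e', 0 < e' -> e' <= e -> Q s e -> Q s e') ->
  exists2 e, 0 < e & forall s, Q s e.
Proof.
move=> h mono.
have hh : forall s, exists e, 0 < e /\ Q s e by move=> s; have [e e0 he] := h s; exists e.
have [g hg] := choice hh.
pose X := \sum_s (g s)^-1 + 1.
have X0 : 0 < X.
  rewrite /X ltr_pwDr //; apply: sumr_ge0 => s _.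
  by rewrite invr_ge0; have [/ltW] := hg s.
exists X^-1; first by rewrite invr_gt0.
move=> s; have [gs qs] := hg s; apply: (mono s (g s)) => //; first by rewrite invr_gt0.
rewrite -[g s]invrK ler_pV2; last 2 first.
- by rewrite inE unitfE (gt_eqF X0) X0.
- by rewrite inE unitfE invr_eq0 (gt_eqF gs) invr_gt0 gs.
rewrite /X (bigD1 s) //= -addrA lerDl; apply: addr_ge0 => //.
by apply: sumr_ge0 => t _; rewrite invr_ge0; have [/ltW] := hg t.
Qed.

Section Final.
Variables (R : realType) (d k n : nat) (r : 'I_d -> nat).
Hypothesis hd : (0 < d)%N.
Hypothesis hn : (0 < n)%N.
Local Notation pt := (pt R d).
Local Notation C := (@cubeN R d n).
Local Notation mu := (@mu R d).
Local Notation lam := (@leb_outer R d).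
Local Notation Mm := (Mm r).
Local Notation Valid := (Valid n r hd).
Local Notation Phi := (@Phi R d k r).
Local Notation zv := (@zv R d r).
Local Notation Pset := (@Pset R d n r hd).

Lemma valid_ext (z z' : 'I_d -> nat -> R) :
  (forall i t, (t <= (r i).+1)%N -> z' i t = z i t) -> Valid z -> Valid z'.
Proof.
move=> h [h1 h2 h3].
have es : sz r hd z' = sz r hd z by rewrite /sz !h.
split.
- by move=> i; rewrite es !h // -(h1 i).
- by move=> i; rewrite !h //; exact: h2.
- by move=> i j hj; rewrite !h ?ltnS ?(leqW hj) //; exact: h3.
Qed.

Lemma lt_Mm i t : (t <= (r i).+1)%N -> (t < Mm)%N.
Proof. by move=> ht; apply: leq_ltn_trans ht _; rewrite /Mm !ltnS r_le. Qed.

Lemma cuboid_ext (z z' : 'I_d -> nat -> R) j :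
  (forall i t, (t <= (r i).+1)%N -> z' i t = z i t) -> valid_index r j ->
  cuboid z' j = cuboid z j.
Proof.
move=> h vj; rewrite /cuboid; congr box; apply: funext => i; rewrite h //.
  by apply: leqW; exact: vj.
by rewrite ltnS; exact: vj.
Qed.

Lemma Fam_ext (z z' : 'I_d -> nat -> R) (P P' : ('I_d -> nat) -> bool) :
  (forall i t, (t <= (r i).+1)%N -> z' i t = z i t) ->
  (forall j, valid_index r j -> P' j = P j) ->
  Fam r z' P' = Fam r z P.
Proof.
move=> hz hP; apply/seteqP; split => x [j [vj Pj cx]]; exists j; split => //.
- by rewrite -hP.
- by rewrite -(cuboid_ext hz vj).
- by rewrite hP.
- by rewrite (cuboid_ext hz vj).
Qed.

Lemma Phi_ge0 f z σ : 0 <= Phi f z σ.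
Proof. by apply: sumr_ge0 => c _; apply: addr_ge0. Qed.

Lemma Phi0 f z σ : Phi f z σ = 0 -> forall c,
  mu (Fam r z (PT σ) `&` Xc f c) = mu (Cb r z `&` Xc f c) / 2 /\
  mu (Fam r z (PF σ) `&` Xc f c) = mu (Cb r z `&` Xc f c) / 2.
Proof.
move=> h0 c.
have := psumr_eq0P (P := xpredT) (fun c _ => addr_ge0 (normr_ge0 _) (normr_ge0 _)) h0 (i := c) isT.
set a := _ - _; set b := _ - _ => hab.
have ha : `|a| = 0 by have := normr_ge0 a; have := normr_ge0 b; lra.
have hb : `|b| = 0 by have := normr_ge0 a; have := normr_ge0 b; lra.
move/normr0_eq0: ha; move/normr0_eq0: hb; rewrite /a /b => hb ha.
by split; apply/eqP; rewrite -subr_eq0 ?ha ?hb.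
Qed.


Lemma fair_of (z : 'I_d -> nat -> R) (P : ('I_d -> nat) -> bool) (f : pt -> 'I_k) c :
  Valid z -> mu (Fam r z P `&` Xc f c) = mu (Cb r z `&` Xc f c) / 2 ->
  lam ([set x | exists j, [/\ valid_index r j, P j & cuboid z j x]] `&` f @^-1` [set c])
  = (lam (Cb r z `&` f @^-1` [set c]) * (2^-1)%:E)%E.
Proof.
move=> vz h.
rewrite (@mu_E R d n hd (Fam r z P `&` Xc f c)); last by move=> x [/(valid_Fam hn vz)].
rewrite (@mu_E R d n hd (Cb r z `&` Xc f c)); last by move=> x [/(valid_Cb vz)].
by rewrite h -EFinM.
Qed.

Lemma mu_half (A Q : set pt) : Q `<=` C -> lam A = (lam Q * (2^-1)%:E)%E ->
  mu A = mu Q / 2.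
Proof. by move=> QC h; rewrite /mu h (@mu_E R d n hd Q QC) -EFinM. Qed.

Lemma notB_pos (f : pt -> 'I_k) : ~ B n r f ->
  forall σ v, Pset v -> 0 < Phi f (zv v) σ.
Proof.
move=> nB σ v [vz hc]; rewrite lt_def Phi_ge0 andbT; apply/eqP => h0.
apply: nB; set z := zv v in vz h0 *.
have [h1 h2 h3] := vz.
have ng := @ninv_gt0 R n hn.
have cE : cube (fun i => z i 0%N) (sz r hd z) = Cb r z.
  rewrite /cube /Cb; congr box; apply: funext => i; have := h1 i; lra.
exists (fun i => z i 0%N), (sz r hd z), z, (PT σ); split.
- have := valid_mono hn (i := i0 hd) (j := 1%N) (m := r (i0 hd)) vz.
  rewrite add1n => /(_ (leqnn _)) hm.
  have := h3 (i0 hd) 0%N (leq0n _); rewrite /sz; lra.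
- by rewrite cE; exact: valid_Cb vz.
- by move=> i; split => //; have := h1 i; lra.
- by move=> i j hj; have := h3 i j hj; split; lra.
- move=> c; have [e1 e2] := Phi0 h0 c; rewrite cE; split.
  + exact: (fair_of vz e1).
  + exact: (fair_of (P := fun j => ~~ PT σ j) vz e2).
Qed.

Lemma B_encode (g : pt -> 'I_k) : B n r g ->
  exists v σ, Pset v /\ Phi g (zv v) σ = 0.
Proof.
move=> [a [s [z [sigma [s0 csub ends gaps fair]]]]].
have ng := @ninv_gt0 R n hn.
have vz : Valid z.
  split.
  - move=> i; rewrite /sz; have [e1 e2] := ends i; have [e3 e4] := ends (i0 hd).
    rewrite e1 e2 e3 e4; ring.
  - move=> i.
    have ha : cube a s a by move=> l; apply/andP; split; lra.
    have hb : cube a s (fun l => a l + s) by move=> l; apply/andP; split; lra.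
    have := csub _ ha i; have := csub _ hb i; have [e1 e2] := ends i.
    rewrite e1 e2 => /andP [? ?] /andP [? ?]; split; lra.
  - by move=> i j hj; have [_ h] := gaps i j hj.
pose v : 'rV[R]_(d * Mm) :=
  mxvec (\matrix_(i, t) z i (if (t <= (r i).+1)%N then nat_of_ord t else 0%N)).
have zvE : forall i t, (t <= (r i).+1)%N -> zv v i t = z i t.
  by move=> i t ht; rewrite /zv /v mxvecE mxE inordK ?(lt_Mm ht) // ht.
pose σ := [ffun J : {ffun 'I_d -> 'I_Mm} => sigma (fun i => nat_of_ord (J i))].
have hPT : forall j, valid_index r j -> PT σ j = sigma j.
  move=> j vj; rewrite /PT /cls ffunE; congr sigma; apply: funext => i.
  by rewrite ffunE inordK // (@lt_Mm i) // leqW // vj.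
exists v, σ; split.
- split; first exact: valid_ext zvE vz.
  move=> c; case: (mxvec_indexP c) => i t; rewrite mxvecE mxE.
  set t' := if _ then _ else _.
  have ht' : (t' <= (r i).+1)%N by rewrite /t'; case: ifP.
  have [_ h2 _] := vz; have [hl hu] := h2 i.
  have := valid_mono hn (i := i) (j := 0%N) (m := t') vz; rewrite add0n => /(_ ht') m1.
  have := valid_mono hn (i := i) (j := t') (m := ((r i).+1 - t')%N) vz.
  rewrite subnKC // => /(_ (leqnn _)) m2.
  apply/andP; split; lra.
have FT : Fam r (zv v) (PT σ) = Fam r z sigma by apply: Fam_ext.
have FF : Fam r (zv v) (PF σ) = Fam r z (fun j => ~~ sigma j).
  by apply: Fam_ext => // j vj; rewrite /PF -/(PT σ j) hPT.
have CE : Cb r (zv v) = cube a s.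
  rewrite /Cb /cube; congr box; apply: funext => i; rewrite zvE //.
  - by have [] := ends i.
  - by have [] := ends i.
have cC : forall c, cube a s `&` Xc g c `<=` C by move=> c x [/csub].
rewrite /Phi; apply: big1 => c _; rewrite FT FF CE.
have [f1 f2] := fair c.
rewrite (mu_half (cC c) f1) (mu_half (cC c) f2).
by rewrite subrr normr0 addr0.
Qed.

Lemma dist_bound (f g : pt -> 'I_k) :
  (((mu (Dn n f g) * (n%:R ^+ d)^-1) * (2%:R ^+ n.+1)^-1)%:E <= dist f g)%E.
Proof.
have t1 : forall m,
    (0 <= dn m f g * ((2%:R ^+ m.+1)^-1)%:E :> \bar R)%E.
  move=> m; apply: mule_ge0; last by rewrite lee_fin invr_ge0 exprn_ge0.
  by apply: mule_ge0; [exact: lo_ge0|rewrite lee_fin invr_ge0 exprn_ge0].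
have t0 : forall m, (1 <= m)%N -> xpredT m ->
    (0 <= dn m f g * ((2%:R ^+ m.+1)^-1)%:E :> \bar R)%E by move=> m _ _; exact: t1.
apply: le_trans (nneseries_lim_ge n.+1 t0).
rewrite big_nat_recr //=.
apply: le_trans (leeDr _ _); last by apply: sume_ge0 => m _; exact: t1.
have DC : Dn n f g `<=` C by move=> x [].
by rewrite /dn (@mu_E R d n hd _ DC) -!EFinM.
Qed.

End Final.

Unset Implicit Arguments. Set Strict Implicit. Set Printing Implicit Defensive.


Theorem mainTheorem2 (R : realType) (k d : nat) (hk : (0 < k)%N) (hd : (0 < d)%N)
  (n : nat) (hn : (0 < n)%N) (r : 'I_d -> nat) (hr : forall i, (0 < r i)%N) :
  forall f : pt R d -> 'I_k, meas_coloring f -> ~ B n r f ->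
  exists eps : R, 0 < eps /\
    forall g : pt R d -> 'I_k, meas_coloring g ->
      (dist f g < eps%:E)%E -> ~ B n r g.
Proof.
move=> f mf nB.
have pos := notB_pos (hd:=hd) hn nB.
have hmin : forall σ : {ffun {ffun 'I_d -> 'I_(Mm r)} -> bool}, exists2 e, 0 < e &
    forall v, @Pset R d n r hd v -> e <= Phi f (zv v) σ.
  by move=> σ; apply: (phi_min hn) => v Pv; apply: pos.
have [e e0 he] := fin_min hmin (fun σ e1 e' _ le h v Pv => le_trans le (h v Pv)).
pose W : R := n%:R ^+ d * 2%:R ^+ n.+1.
have W0 : 0 < W by rewrite /W mulr_gt0 // exprn_gt0 // ltr0n.
pose eps := e / (k%:R * 3 * W + 1).
have X0 : 0 < k%:R * 3 * W + 1 by apply: ltr_pwDr => //; rewrite mulr_ge0 // ?ltW // mulr_ge0.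
have eps0 : 0 < eps by rewrite /eps divr_gt0.
exists eps; split => // g mg hdist Bg.
have [v [σ [Pv h0]]] := B_encode hd hn Bg.
have := phi_col hn f g σ (proj1 Pv).
rewrite h0 sub0r normrN ger0_norm ?Phi_ge0 // => hc.
have he' := he σ v Pv.
have := le_lt_trans (dist_bound hd hn f g) hdist; rewrite lte_fin => hlt.
have eqW : mu (Dn n f g) * (n%:R ^+ d)^-1 * (2%:R ^+ n.+1)^-1 = mu (Dn n f g) / W.
  by rewrite /W invfM mulrA.
rewrite eqW ltr_pdivrMr // in hlt.
have hk3 : k%:R * (3 * mu (Dn n f g)) <= k%:R * (3 * (eps * W)).
  by rewrite ler_wpM2l // ler_wpM2l // ltW.
have eq : k%:R * (3 * (eps * W)) = e - eps.
  rewrite /eps; field; exact: lt0r_neq0.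
lra.
Qed.
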